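(* Let $\kappa$ be a regular infinite cardinal. If a Boolean algebra $B$ has the $\kappa$-FN, then $c(B)\le 2^{<\kappa}$ and $\mathrm{Length}(B)\le 2^{<\kappa}$.
   Context: For an infinite cardinal $\kappa$, a Boolean algebra $B$ has the $\kappa$-Freese–Nation property ($\kappa$-FN) if there is a map $f:B\to[B]^{<\kappa}$ such that for all $a,b\in B$ with $a\le b$ there is $c\in f(a)\cap f(b)$ with $a\le c\le b$. $c(B)$ (cellularity) is the supremum of cardinalities of sets of pairwise disjoint nonzero elements of $B$; $\mathrm{Length}(B)$ is the supremum of cardinalities of subsets of $B$ linearly ordered by the Boolean order. *)

(* Defs.v *)
(* Boolean algebras are ctbDistrLatticeType (complemented
   distributive lattices with top and bottom) from mathcomp order. *)
From HB Require Import structures.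
From mathcomp Require Import all_boot all_order.
Set Implicit Arguments. Unset Strict Implicit. Unset Printing Implicit Defensive.
Import Order.Theory.

Definition le_card (X Y : Type) : Prop := exists f : X -> Y, injective f.
Definition lt_card (X Y : Type) : Prop := le_card X Y /\ ~ le_card Y X.

Definition segment (K : Type) (lt : K -> K -> Prop) (a : K) : Type :=
  {b : K | lt b a}.

(* (K, lt) is an infinite initial ordinal, i.e. an infinite cardinal kappa
   presented as a well-ordered set of order type kappa. *)
Definition infinite_cardinal (K : Type) (lt : K -> K -> Prop) : Prop :=
  [/\ (forall x, ~ lt x x),
      (forall x y z, lt x y -> lt y z -> lt x z),
      (forall x y, lt x y \/ x = y \/ lt y x) &
      well_founded lt] /\
  le_card nat K /\
  (forall a, lt_card (segment lt a) K).

Definition regular_cardinal (K : Type) (lt : K -> K -> Prop) : Prop :=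
  infinite_cardinal lt /\
  forall S : K -> Prop, lt_card {x | S x} K -> exists a, forall x, S x -> lt x a.

(* ^{<kappa}2 = union over alpha < kappa of functions alpha -> 2; its
   cardinality is 2^{<kappa} (Kunen's definition). *)
Definition two_lt (K : Type) (lt : K -> K -> Prop) : Type :=
  {a : K & segment lt a -> bool}.

Definition kappa_FN (K : Type) (d : Order.disp_t) (B : ctbDistrLatticeType d) : Prop :=
  exists f : B -> B -> Prop,
    (forall a, lt_card {x | f a x} K) /\
    (forall a b : B, (a <= b)%O ->
       exists c, [/\ f a c, f b c, (a <= c)%O & (c <= b)%O]).

Definition disjoint_family (d : Order.disp_t) (B : ctbDistrLatticeType d)
  (A : B -> Prop) : Prop :=
  (forall x, A x -> x != \bot%O) /\
  (forall x y, A x -> A y -> x <> y -> (x `&` y)%O = \bot%O).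

Definition chain (d : Order.disp_t) (B : ctbDistrLatticeType d) (C : B -> Prop) : Prop :=
  forall x y, C x -> C y -> (x <= y)%O \/ (y <= x)%O.

(* Main.v *)
Require Import Defs.
From mathcomp Require Import all_boot all_order.
From Stdlib Require Import ClassicalEpsilon ProofIrrelevance FunctionalExtensionality PropExtensionality.
Set Implicit Arguments. Unset Strict Implicit.

Section Card.
Variables (K : Type) (lt : K -> K -> Prop).
Hypothesis HK : regular_cardinal lt.

Lemma lt_irr x : ~ lt x x.
Proof. by case: HK => [[[H _ _ _] _] _]. Qed.
Lemma lt_trans x y z : lt x y -> lt y z -> lt x z.
Proof. by case: HK => [[[_ H _ _] _] _]; apply: H. Qed.
Lemma lt_tri x y : lt x y \/ x = y \/ lt y x.
Proof. by case: HK => [[[_ _ H _] _] _]. Qed.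
Lemma lt_wf : well_founded lt.
Proof. by case: HK => [[[_ _ _ H] _] _]. Qed.
Lemma nat_inj : le_card nat K.
Proof. by case: HK => [[_ [H _]] _]. Qed.

Definition small (X : Type) := ~ le_card K X.

Lemma small_inj X Y (g : X -> Y) : injective g -> small Y -> small X.
Proof.
move=> gi sY [h hi]; apply: sY; exists (fun k => g (h k)).
by move=> a b /gi /hi.
Qed.

Lemma sig_inj (T : Type) (P : T -> Prop) : injective (@proj1_sig T P).
Proof.
by move=> [a ha] [b hb] /= e; subst b; rewrite (proof_irrelevance _ ha hb).
Qed.

Lemma RB X (S : K -> Prop) (g : {k | S k} -> X) : injective g -> small X ->
  exists b, forall k, S k -> lt k b.
Proof.
move=> gi sX.
case: HK => _ /(_ S) H; apply: H; split.
  by exists (@proj1_sig K S); apply: sig_inj.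
exact: (small_inj gi sX).
Qed.

Lemma small_seg a : small (segment lt a).
Proof. by case: HK => [[_ [_ H]] _]; case: (H a). Qed.

Lemma small_unit : small unit.
Proof.
move=> [h hi]; case: nat_inj => n ni.
have : n 0 = n 1 by apply: hi; case: (h (n 0)); case: (h (n 1)).
by move/ni.
Qed.

Lemma small_image X (g : X -> K) : small X -> exists b, forall x, lt (g x) b.
Proof.
move=> sX.
pose S k := exists x, g x = k.
pose pre (s : {k | S k}) : X := proj1_sig (constructive_indefinite_description _ (proj2_sig s)).
have preE s : g (pre s) = proj1_sig s by rewrite /pre; case: constructive_indefinite_description.
have pi : injective pre.
  by move=> s1 s2 e; apply: sig_inj; rewrite -!preE e.
case: (RB pi sX) => b Hb; exists b => x; apply: Hb; by exists x.
Qed.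

Lemma small_prod X Y : small X -> small Y -> small (X * Y).
Proof.
move=> sX sY [g gi].
have Hb : forall x : X, exists b, forall k, (g k).1 = x -> lt k b.
  move=> x.
  pose h (s : {k | (g k).1 = x}) : Y := (g (proj1_sig s)).2.
  have hi : injective h.
    move=> [k1 e1] [k2 e2]; rewrite /h /= => e; apply: sig_inj => /=; apply: gi.
    by move: e1 e2 e; case: (g k1); case: (g k2) => /= ? ? ? ? -> -> ->.
  by apply: (RB hi sY).
pose beta x := proj1_sig (constructive_indefinite_description _ (Hb x)).
have betaP x k : (g k).1 = x -> lt k (beta x).
  by rewrite /beta; case: constructive_indefinite_description => /= b; apply.
case: (small_image beta sX) => b bP.
apply: (@lt_irr b); apply: (lt_trans (betaP _ b erefl)); apply: bP.
Qed.

Lemma bound_above x : exists y, lt x y.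
Proof. by case: (small_image (fun _ : unit => x) small_unit) => b H; exists b; apply: (H tt). Qed.

Lemma max2 a b : exists c, (forall x, lt x a -> lt x c) /\ (forall x, lt x b -> lt x c).
Proof.
case: (lt_tri a b) => [H|[->|H]].
- by exists b; split=> // x Hx; apply: lt_trans Hx H.
- by exists b.
- by exists a; split=> // x Hx; apply: lt_trans Hx H.
Qed.

Lemma least_exists (P : K -> Prop) : (exists k, P k) -> exists k, P k /\ forall k', P k' -> ~ lt k' k.
Proof.
move=> [k Pk]; apply: NNPP => Hn; move: Pk; elim/(well_founded_ind lt_wf): k => k IH Pk.
apply: Hn; exists k; split=> // k' Pk' lk'; by apply: (IH k' lk' Pk').
Qed.

Lemma finite_bound (P : nat -> K -> Prop) N :
  (forall t, exists b, forall v, P t v -> lt v b) ->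
  exists c, forall t v, (t <= N)%N -> P t v -> lt v c.
Proof.
move=> H; elim: N => [|N [c Hc]].
  case: (H 0) => b Hb; exists b => t v; rewrite leqn0 => /eqP -> ; apply: Hb.
case: (H N.+1) => b Hb; case: (max2 c b) => e [e1 e2]; exists e => t v.
rewrite leq_eqVlt ltnS => /orP [/eqP -> Pv|tN Pv]; first by apply: e2; apply: Hb.
by apply: e1; apply: Hc tN Pv.
Qed.

Lemma wo_embed (W : Type) (R : W -> W -> Prop) : well_founded R ->
  (forall p q, p <> q -> R p q \/ R q p) -> (forall p, small {q | R q p}) ->
  exists h : W -> K, injective h.
Proof.
move=> wf tot sm.
case: nat_inj => n _.
pose F p (rec : forall q, R q p -> K) : K :=
  epsilon (inhabits (n 0)) (fun k => forall q (H : R q p), rec q H <> k).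
pose h := Fix wf (fun _ => K) F.
have hE p : h p = F p (fun q _ => h q).
  rewrite /h Fix_eq // => x f1 f2 E; rewrite /F; f_equal.
  apply: functional_extensionality => k; apply: propositional_extensionality.
  by split=> H q Hq; [rewrite -E | rewrite E]; apply: H.
have key p q : R q p -> h q <> h p.
  move=> Rqp; rewrite [h p]hE /F.
  have : exists k, forall q (H : R q p), h q <> k.
    apply: NNPP => Hn.
    have Hs : forall k, exists s : {q | R q p}, h (proj1_sig s) = k.
      move=> k; apply: NNPP => Hk; apply: Hn; exists k => q0 H0 e.
      by apply: Hk; exists (exist _ q0 H0).
    apply: (sm p); exists (fun k => proj1_sig (constructive_indefinite_description _ (Hs k))).
    move=> k1 k2 e.
    case: constructive_indefinite_description e => s1 /= e1.
    by case: constructive_indefinite_description => s2 /= e2 e; rewrite -e1 -e2 e.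
  move=> Hex; move: (epsilon_spec (inhabits (n 0)) _ Hex) => /(_ q Rqp).
  by [].
exists h => p q e; apply: NNPP => ne.
case: (tot p q ne) => H.
- by apply: (key q p H).
- by apply: (key p q H).
Qed.


Definition mx (p : K * K) : K :=
  if excluded_middle_informative (lt p.1 p.2) then p.2 else p.1.

Definition R2 (q p : K * K) : Prop :=
  lt (mx q) (mx p) \/ (mx q = mx p /\ (lt q.1 p.1 \/ (q.1 = p.1 /\ lt q.2 p.2))).

Lemma R2_wf : well_founded R2.
Proof.
have H : forall m a b, mx (a, b) = m -> Acc R2 (a, b).
  elim/(well_founded_ind lt_wf) => m IHm.
  elim/(well_founded_ind lt_wf) => a IHa.
  elim/(well_founded_ind lt_wf) => b IHb Hm.
  constructor => -[a' b'] [H|[H1 [H2|[H2 H3]]]].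
  - by apply: (IHm (mx (a', b'))); rewrite // -Hm.
  - by apply: (IHa a' H2 b'); rewrite H1.
  - simpl in H2, H3; subst a'; apply: IHb => //; by rewrite H1.
by move=> [a b]; apply: (H (mx (a, b))).
Qed.

Lemma R2_tot p q : p <> q -> R2 p q \/ R2 q p.
Proof.
move: p q => [a b] [a' b'] ne; rewrite /R2 /=.
case: (lt_tri (mx (a, b)) (mx (a', b'))) => [H|[E|H]].
- by left; left.
- case: (lt_tri a a') => [H|[E2|H]].
  + by left; right; split=> //; left.
  + case: (lt_tri b b') => [H|[E3|H]].
    * by left; right; split=> //; right; split.
    * by subst.
    * by right; right; split=> //; right; split.
  + by right; right; split=> //; left.
- by right; left.
Qed.

Lemma mx_spec a b : (lt a b /\ mx (a, b) = b) \/ (~ lt a b /\ mx (a, b) = a).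
Proof. by rewrite /mx /=; case: excluded_middle_informative => H; [left|right]. Qed.

Lemma le_mx p : (p.1 = mx p \/ lt p.1 (mx p)) /\ (p.2 = mx p \/ lt p.2 (mx p)).
Proof.
move: p => [a b] /=; case: (mx_spec a b) => [[H ->]|[H ->]].
  by split; [right|left].
split; [by left|].
by case: (lt_tri a b) => [//|[->|H']]; [left|right].
Qed.

Lemma R2_small p : small {q | R2 q p}.
Proof.
case: (bound_above (mx p)) => m Hm.
have Hq : forall q, R2 q p -> lt q.1 m /\ lt q.2 m.
  move=> q Rq.
  have Hmq : lt (mx q) m.
    case: Rq => [H|[-> _]] //; by apply: lt_trans H Hm.
  case: (le_mx q) => [[->|H1] [->|H2]]; split=> //; by apply: lt_trans Hmq.
pose g (s : {q | R2 q p}) : segment lt m * segment lt m :=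
  (exist _ _ (proj1 (Hq _ (proj2_sig s))), exist _ _ (proj2 (Hq _ (proj2_sig s)))).
have gi : injective g.
  move=> [[a b] h] [[a' b'] h']; rewrite /g /= => -[e1 e2]; apply: sig_inj => /=.
  by congr pair.
by apply: (small_inj gi); apply: small_prod; apply: small_seg.
Qed.

Lemma pairing : exists pi : K * K -> K, injective pi.
Proof. apply: (wo_embed R2_wf R2_tot R2_small). Qed.

End Card.

Unset Implicit Arguments.

Section Clo.
Variables (K : Type) (lt : K -> K -> Prop).
Hypothesis HK : regular_cardinal lt.
Variables (pi : K * K -> K) (nn : nat -> K).
Hypotheses (Hpi : injective pi) (Hnn : injective nn).
Variables (B : Type) (b0 : B) (neg : B -> B) (f : B -> B -> Prop).
Hypothesis Hf : forall a, lt_card {x | f a x} K.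
Variable W : (B -> Prop) -> (B -> Prop) -> B.

Notation Code := (two_lt lt).
Definition len (t : Code) : K := projT1 t.
Definition bit (t : Code) (k : K) : Prop :=
  exists h : lt k (len t), projT2 t (exist _ k h) = true.

Record ins := Ins { md : nat; kk : K; ll : K; tau : K -> Code; sg : K -> nat }.

Definition Q (I : ins) (tag : nat) (v : K) : Prop :=
  match tag with
  | 0 => v = nn (md I)
  | 1 => v = kk I
  | 2 => v = ll I
  | 3 => exists i, lt i (ll I) /\ v = pi (i, nn (sg I i))
  | 4 => exists i, lt i (ll I) /\ v = pi (i, len (tau I i))
  | 5 => exists i j, lt i (ll I) /\ bit (tau I i) j /\ v = pi (i, j)
  | _ => False
  end.

Definition DI (I : ins) (k : K) : Prop := exists tag v, Q I tag v /\ k = pi (nn tag, v).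

Definition Enc (I : ins) (t : Code) : Prop :=
  (forall k, DI I k <-> bit t k) /\ (forall i, lt i (ll I) -> lt (len (tau I i)) (len t)).

Definition iota (a : B) : {x | f a x} -> K :=
  proj1_sig (constructive_indefinite_description _ (proj1 (Hf a))).
Lemma iota_inj a : injective (iota a).
Proof. by rewrite /iota; case: constructive_indefinite_description. Qed.

Definition chld (a : B) (k : K) : B :=
  epsilon (inhabits b0) (fun y => exists h : f a y, iota a (exist _ y h) = k).

Definition P1 (I : ins) (v : K -> B) (y : B) : Prop :=
  exists i, lt i (ll I) /\ (sg I i = 1 \/ sg I i = 3) /\ v i = y.
Definition P2 (I : ins) (v : K -> B) (y : B) : Prop :=
  exists i, lt i (ll I) /\ (sg I i = 2 \/ sg I i = 3) /\ v i = y.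

Definition Psi (m : nat) (k : K) (S1 S2 : B -> Prop) : B :=
  match m with
  | 0 => W S1 S2
  | 1 => chld (epsilon (inhabits b0) S1) k
  | _ => chld (neg (epsilon (inhabits b0) S1)) k
  end.

Definition Phi (I : ins) (v : K -> B) : B := Psi (md I) (kk I) (P1 I v) (P2 I v).

Inductive Rel : Code -> B -> Prop :=
  RelI : forall (I : ins) (t : Code) (v : K -> B), Enc I t ->
    (forall i, lt i (ll I) -> Rel (tau I i) (v i)) -> Rel t (Phi I v).


Lemma DI_Q I J : (forall k, DI I k <-> DI J k) -> forall tag v, Q I tag v <-> Q J tag v.
Proof.
move=> H.
have side : forall I J, (forall k, DI I k -> DI J k) -> forall tag v, Q I tag v -> Q J tag v.
  move=> I' J' H' tag v Hq.
  have : DI I' (pi (nn tag, v)) by exists tag, v.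
  move/H' => [tag' [v' [Hq' e]]].
  by move/Hpi: e => -[/Hnn -> ->].
by move=> tag v; split; apply: side => k; case: (H k).
Qed.

Lemma code_ext (t t' : Code) : len t = len t' -> (forall j, bit t j <-> bit t' j) -> t = t'.
Proof.
move: t t' => [a g] [a' g']; rewrite /len /bit /= => e; subst a' => H.
congr existT; apply: functional_extensionality => -[j h].
case E: (g (exist _ j h)); case E': (g' (exist _ j h)) => //.
- have : exists h, g (exist _ j h) = true by exists h.
  by move/H => [h' e']; move: e'; rewrite (proof_irrelevance _ h' h) E'.
- have : exists h, g' (exist _ j h) = true by exists h.
  by move/H => [h' e']; move: e'; rewrite (proof_irrelevance _ h' h) E.
Qed.

Definition equiv (I J : ins) : Prop :=
  md I = md J /\ kk I = kk J /\ ll I = ll J /\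
  forall i, lt i (ll I) -> sg I i = sg J i /\ tau I i = tau J i.

Lemma Q_equiv I J : (forall tag v, Q I tag v <-> Q J tag v) -> equiv I J.
Proof.
move=> H.
have e0 : md I = md J.
  by move: (proj1 (H 0 (nn (md I))) erefl) => /= /Hnn.
have e1 : kk I = kk J by move: (proj1 (H 1 (kk I)) erefl).
have e2 : ll I = ll J by move: (proj1 (H 2 (ll I)) erefl).
split=> //; split=> //; split=> // i hi; split.
  have : Q I 3 (pi (i, nn (sg I i))) by exists i.
  by move/H => [i' [_ /Hpi [-> /Hnn ->]]].
have el : len (tau I i) = len (tau J i).
  have : Q I 4 (pi (i, len (tau I i))) by exists i.
  by move/H => [i' [_ /Hpi [-> ->]]].
apply: code_ext => // j; split => hb.
  have : Q I 5 (pi (i, j)) by exists i, j.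
  by move/H => [i' [j' [_ [hb' /Hpi [-> ->]]]]].
have : Q J 5 (pi (i, j)) by exists i, j; rewrite -e2.
by move/H => [i' [j' [_ [hb' /Hpi [-> ->]]]]].
Qed.

Lemma Enc_fun I J t : Enc I t -> Enc J t -> equiv I J.
Proof.
move=> [H1 _] [H2 _]; apply: Q_equiv; apply: DI_Q => k.
by rewrite H1 H2.
Qed.


Lemma enc_exists I : exists t, Enc I t.
Proof.
have [a Ha] : exists a, forall i, lt i (ll I) -> lt (len (tau I i)) a.
  case: (small_image HK (fun s : segment lt (ll I) => len (tau I (proj1_sig s))) (@small_seg _ _ HK (ll I))) => a Ha.
  by exists a => i hi; exact: (Ha (exist _ i hi)).
have HQ : forall tag, exists b, forall v, Q I tag v -> lt v b.
  case=> [|[|[|[|[|[|tag]]]]]] /=.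
  - by case: (bound_above HK (nn (md I))) => b Hb; exists b => v ->.
  - by case: (bound_above HK (kk I)) => b Hb; exists b => v ->.
  - by case: (bound_above HK (ll I)) => b Hb; exists b => v ->.
  - case: (small_image HK (fun s : segment lt (ll I) => pi (proj1_sig s, nn (sg I (proj1_sig s)))) (@small_seg _ _ HK (ll I))) => b Hb.
    by exists b => v [i [hi ->]]; exact: (Hb (exist _ i hi)).
  - case: (small_image HK (fun s : segment lt (ll I) => pi (proj1_sig s, len (tau I (proj1_sig s)))) (@small_seg _ _ HK (ll I))) => b Hb.
    by exists b => v [i [hi ->]]; exact: (Hb (exist _ i hi)).
  - case: (small_image HK (fun p : segment lt (ll I) * segment lt a => pi (proj1_sig p.1, proj1_sig p.2)) (small_prod HK (@small_seg _ _ HK (ll I)) (@small_seg _ _ HK a))) => b Hb.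
    exists b => v [i [j [hi [[hj _] ->]]]].
    exact: (Hb (exist _ i hi, exist _ j (lt_trans HK hj (Ha i hi)))).
  - by case: (bound_above HK (nn 0)) => b _; exists b.
case: (@finite_bound _ _ HK (Q I) 5 HQ) => cV HcV.
case: (@finite_bound _ _ HK (fun t v => v = nn t) 5) => [t|cT HcT].
  by case: (bound_above HK (nn t)) => b Hb; exists b => v ->.
case: (max2 HK cV cT) => c [c1 c2].
case: (small_image HK (fun p : segment lt c * segment lt c => pi (proj1_sig p.1, proj1_sig p.2)) (small_prod HK (@small_seg _ _ HK c) (@small_seg _ _ HK c))) => c0 Hc0.
have HD : forall k, DI I k -> lt k c0.
  move=> k [tag [v [Hq ->]]].
  have Ht : (tag <= 5)%N by move: Hq; case: tag => [|[|[|[|[|[|tag]]]]]].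
  have h1 : lt (nn tag) c by apply: c2; apply: (HcT _ _ Ht).
  have h2 : lt v c by apply: c1; apply: (HcV _ _ Ht Hq).
  exact: (Hc0 (exist _ _ h1, exist _ _ h2)).
case: (max2 HK c0 a) => L [L1 L2].
pose g (s : segment lt L) : bool :=
  if excluded_middle_informative (DI I (proj1_sig s)) then true else false.
exists (existT _ L g); split.
- move=> k; split.
  + move=> Hk; exists (L1 _ (HD _ Hk)); rewrite /g /=.
    by case: excluded_middle_informative.
  + move=> [h]; rewrite /g /=.
    by case: excluded_middle_informative.
- by move=> i hi; apply: L2; exact: Ha.
Qed.


Lemma Phi_eq I J v v' : equiv I J -> (forall i, lt i (ll I) -> v i = v' i) -> Phi I v = Phi J v'.
Proof.
move=> [e0 [e1 [e2 e3]]] Hv; rewrite /Phi e0 e1.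
have -> : P1 I v = P1 J v'.
  apply: functional_extensionality => y; apply: propositional_extensionality.
  split=> -[i [hi [hs hv]]]; exists i.
  - by case: (e3 i hi) => es _; rewrite -e2 -es -(Hv i hi).
  - have hi' : lt i (ll I) by rewrite e2.
    by case: (e3 i hi') => es _; rewrite es (Hv i hi').
have -> : P2 I v = P2 J v' => //.
apply: functional_extensionality => y; apply: propositional_extensionality.
split=> -[i [hi [hs hv]]]; exists i.
- by case: (e3 i hi) => es _; rewrite -e2 -es -(Hv i hi).
- have hi' : lt i (ll I) by rewrite e2.
  by case: (e3 i hi') => es _; rewrite es (Hv i hi').
Qed.

Lemma Rel_fun t y : Rel t y -> forall y', Rel t y' -> y = y'.
Proof.
elim=> I t0 v HE Hv IH y' H'.
inversion H' as [J t2 v2 HE2 Hv2 e1 e2]; subst.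
have EQ := Enc_fun I J t0 HE HE2.
apply: Phi_eq => // i hi; apply: IH => //.
case: EQ => [_ [_ [e2 e3]]]; case: (e3 i hi) => _ ->.
by apply: Hv2; rewrite -e2.
Qed.

Definition M (y : B) : Prop := exists t, Rel t y.

Lemma M_inj : le_card {y | M y} Code.
Proof.
exists (fun s : {y | M y} => proj1_sig (constructive_indefinite_description (fun t => Rel t (proj1_sig s)) (proj2_sig s))).
move=> s1 s2.
case: constructive_indefinite_description => t1 h1.
case: constructive_indefinite_description => t2 h2 /= e; subst t2.
by apply: sig_inj; apply: (Rel_fun _ _ h1 _ h2).
Qed.


Lemma chld_eq a y (h : f a y) : chld a (iota a (exist _ y h)) = y.
Proof.
rewrite /chld.
have := epsilon_spec (inhabits b0) (fun y' => exists h' : f a y', iota a (exist _ y' h') = iota a (exist _ y h)) (ex_intro _ y (ex_intro _ h erefl)).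
by move=> [h' /iota_inj e]; apply: (f_equal (@proj1_sig _ _) e).
Qed.

Lemma eps_eq z : epsilon (inhabits b0) (fun y => y = z) = z.
Proof. exact: (epsilon_spec (inhabits b0) (fun y => y = z) (ex_intro _ z erefl)). Qed.

Lemma M_chld m z k : (m = 1 \/ m = 2) -> M z ->
  M (Psi m k (fun y => y = z) (fun _ => False)).
Proof.
move=> Hm [t Rt].
case: (bound_above HK (nn 0)) => l0 Hl0.
pose I := Ins m k l0 (fun _ => t) (fun _ => 1).
case: (enc_exists I) => t' HE.
have R := RelI I t' (fun _ => z) HE (fun _ _ => Rt).
exists t'; move: R; rewrite /Phi /=.
have -> : P1 I (fun _ => z) = (fun y => y = z).
  apply: functional_extensionality => y; apply: propositional_extensionality.
  split; first by move=> [i [_ [_ ->]]].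
  by move=> ->; exists (nn 0); split=> //; split=> //; left.
have -> : P2 I (fun _ => z) = (fun _ => False) => //.
apply: functional_extensionality => y; apply: propositional_extensionality.
by split=> // -[i [_ [[] //]]].
Qed.

Lemma M_f z y : M z -> f z y -> M y.
Proof.
move=> Mz h; rewrite -(chld_eq z y h).
have := M_chld 1 z (iota z (exist _ y h)) (or_introl erefl) Mz.
by rewrite /Psi eps_eq.
Qed.

Lemma M_fneg z y : M z -> f (neg z) y -> M y.
Proof.
move=> Mz h; rewrite -(chld_eq (neg z) y h).
have := M_chld 2 z (iota (neg z) (exist _ y h)) (or_intror erefl) Mz.
by rewrite /Psi eps_eq.
Qed.

Lemma M_dummy : exists t0 y0, Rel t0 y0.
Proof.
case: (@least_exists _ _ HK (fun _ => True) (ex_intro _ (nn 0) I)) => lb [_ Hlb].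
pose I0 := Ins 0 (nn 0) lb (fun _ => existT _ lb (fun _ => false)) (fun _ => 0).
case: (enc_exists I0) => t0 HE.
exists t0, (Phi I0 (fun _ => b0)); apply: RelI => // i hi.
by case: (Hlb i I).
Qed.


Lemma M_W a (S1 S2 : B -> Prop) : (forall y, S1 y -> f a y) -> (forall y, S2 y -> f a y) ->
  (forall y, S1 y -> M y) -> (forall y, S2 y -> M y) -> M (W S1 S2).
Proof.
move=> H1 H2 M1 M2.
case: M_dummy => t0 [y0 R0].
case: (small_image HK (iota a) (proj2 (Hf a))) => l Hl.
pose in1 i := (exists h : f a (chld a i), iota a (exist _ (chld a i) h) = i) /\ S1 (chld a i).
pose in2 i := (exists h : f a (chld a i), iota a (exist _ (chld a i) h) = i) /\ S2 (chld a i).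
pose v i := if excluded_middle_informative (in1 i \/ in2 i) then chld a i else y0.
pose tau' i := epsilon (inhabits t0) (fun t => Rel t (v i)).
pose sgf i := ((if excluded_middle_informative (in1 i) then 1 else 0) +
               (if excluded_middle_informative (in2 i) then 2 else 0))%N.
have Hv : forall i, Rel (tau' i) (v i).
  move=> i; apply: (epsilon_spec (inhabits t0) (fun t => Rel t (v i))).
  rewrite /v; destruct (excluded_middle_informative (in1 i \/ in2 i)) as [h|h]; last by exists t0.
  case: h => h.
  - exact: (M1 _ h.2).
  - exact: (M2 _ h.2).
pose I := Ins 0 (nn 0) l tau' sgf.
case: (enc_exists I) => t HE.
have R := RelI I t v HE (fun i _ => Hv i).
exists t; move: R; rewrite /Phi /=.
have inX : forall (S : B -> Prop) (HS : forall y, S y -> f a y) y (Sy : S y),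
   let i := iota a (exist _ y (HS y Sy)) in
   lt i l /\ chld a i = y /\ (exists h : f a (chld a i), iota a (exist _ (chld a i) h) = i).
  move=> S HS y Sy i; split; first exact: Hl.
  have Hc : chld a i = y by apply: chld_eq.
  split=> //; rewrite Hc; by exists (HS y Sy).
have vE : forall i, (in1 i \/ in2 i) -> v i = chld a i.
  move=> i h; rewrite /v; destruct (excluded_middle_informative (in1 i \/ in2 i)) as [h'|h'] => //.
have s1E : forall i, (sgf i = 1 \/ sgf i = 3) <-> in1 i.
  move=> i; rewrite /sgf.
  destruct (excluded_middle_informative (in1 i)) as [h1|h1];
  destruct (excluded_middle_informative (in2 i)) as [h2|h2]; split=> //=;
  (try by case); move=> _; by [left|right].
have s2E : forall i, (sgf i = 2 \/ sgf i = 3) <-> in2 i.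
  move=> i; rewrite /sgf.
  destruct (excluded_middle_informative (in1 i)) as [h1|h1];
  destruct (excluded_middle_informative (in2 i)) as [h2|h2]; split=> //=;
  (try by case); move=> _; by [left|right].
have -> : P1 I v = S1.
  apply: functional_extensionality => y; apply: propositional_extensionality; split.
  - move=> [i [hi [/s1E hs hv]]]; rewrite -hv vE; [exact: hs.2|by left].
  - move=> Sy; case: (inX S1 H1 y Sy) => hi [hc hex].
    exists (iota a (exist _ y (H1 y Sy))); split=> //.
    have hin1 : in1 (iota a (exist _ y (H1 y Sy))) by split=> //; rewrite hc.
    split; first by apply/s1E.
    by rewrite vE; [|left].
have -> : P2 I v = S2 => //.
apply: functional_extensionality => y; apply: propositional_extensionality; split.
- move=> [i [hi [/s2E hs hv]]]; rewrite -hv vE; [exact: hs.2|by right].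
- move=> Sy; case: (inX S2 H2 y Sy) => hi [hc hex].
  exists (iota a (exist _ y (H2 y Sy))); split=> //.
  have hin2 : in2 (iota a (exist _ y (H2 y Sy))) by split=> //; rewrite hc.
  split; first by apply/s2E.
  by rewrite vE; [|right].
Qed.

End Clo.

Lemma fn_closure (K : Type) (lt : K -> K -> Prop) (HK : regular_cardinal lt)
  (B : Type) (b0 : B) (neg : B -> B) (f : B -> B -> Prop)
  (Hf : forall a, lt_card {x | f a x} K) (W : (B -> Prop) -> (B -> Prop) -> B) :
  exists Ms : B -> Prop, le_card {y | Ms y} (two_lt lt) /\
    (forall z y, Ms z -> f z y -> Ms y) /\
    (forall z y, Ms z -> f (neg z) y -> Ms y) /\
    (forall a (S1 S2 : B -> Prop), (forall y, S1 y -> f a y) -> (forall y, S2 y -> f a y) ->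
       (forall y, S1 y -> Ms y) -> (forall y, S2 y -> Ms y) -> Ms (W S1 S2)).
Proof.
case: (pairing HK) => pi Hpi; case: (nat_inj HK) => nn Hnn.
exists (M K lt pi nn B b0 neg f Hf W); split; first exact: M_inj.
split; first exact: M_f.
split; first exact: M_fneg.
exact: M_W.
Qed.

Import Order.Theory.

Theorem corollary4p4 (K : Type) (lt : K -> K -> Prop)
  (d : Order.disp_t) (B : ctbDistrLatticeType d) :
  regular_cardinal lt -> kappa_FN K B ->
  (forall A : B -> Prop, disjoint_family A -> le_card {x | A x} (two_lt lt)) /\
  (forall C : B -> Prop, chain C -> le_card {x | C x} (two_lt lt)).
Proof.
move=> HK [f [Hf HFN]].
have inj_of : forall (A Ms : B -> Prop), (forall x, A x -> Ms x) ->
    le_card {y | Ms y} (two_lt lt) -> le_card {x | A x} (two_lt lt).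
  move=> A Ms AM [g gi].
  exists (fun s : {x | A x} => g (exist _ (proj1_sig s) (AM _ (proj2_sig s)))).
  move=> s1 s2 /gi e; apply: sig_inj; exact: (f_equal (@proj1_sig _ _) e).
split.
- move=> A [Anz Adisj].
  pose W1 (S1 S2 : B -> Prop) : B :=
    epsilon (inhabits (\bot%O : B)) (fun z => A z /\ forall s, S1 s -> (z <= s)%O).
  case: (fn_closure _ _ HK _ (\bot%O : B) (fun x => (~` x)%O) f Hf W1) => Ms [Minj [Mf [Mfn MW]]].
  apply: (inj_of A Ms) => // x Ax.
  pose S1 := fun c => f x c /\ Ms c /\ (x <= c)%O.
  have Mz := MW x S1 (fun _ => False) (fun y h => proj1 h) (fun y h => match h with end)
     (fun y h => proj1 (proj2 h)) (fun y h => match h with end).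
  have := epsilon_spec (inhabits (\bot%O : B)) (fun z => A z /\ forall s, S1 s -> (z <= s)%O)
     (ex_intro _ x (conj Ax (fun s h => proj2 (proj2 h)))).
  rewrite /W1 in Mz.
  set z := epsilon _ _ in Mz *.
  move=> [Az Hz].
  case: (classic (z = x)) => [<- //|ne].
  have dj := Adisj x z Ax Az (nesym ne).
  have xle : (x <= ~` z)%O by rewrite -disj_leC dj.
  case: (HFN x (~` z)%O xle) => c [fxc fzc xc cz].
  have Mc := Mfn z c Mz fzc.
  have zc := Hz c (conj fxc (conj Mc xc)).
  have /meet_idPl zz : (z <= ~` z)%O := le_trans zc cz.
  by move: (Anz z Az); rewrite -zz meetxC eqxx.
- move=> C Cch.
  pose W2 (S1 S2 : B -> Prop) : B :=
    epsilon (inhabits (\bot%O : B)) (fun z => C z /\ (forall s, S1 s -> (z <= s)%O) /\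
       (forall s, S2 s -> (s <= z)%O) /\ ~ S1 z /\ ~ S2 z).
  case: (fn_closure _ _ HK _ (\bot%O : B) (fun x => (~` x)%O) f Hf W2) => Ms [Minj [Mf [Mfn MW]]].
  apply: (inj_of C Ms) => // x Cx.
  pose S1 := fun c => f x c /\ Ms c /\ (x <= c)%O.
  pose S2 := fun c => f x c /\ Ms c /\ (c <= x)%O.
  case: (classic (S1 x \/ S2 x)) => [[h|h]|hn]; first by case: h => _ [].
    by case: h => _ [].
  have Mz := MW x S1 S2 (fun y h => proj1 h) (fun y h => proj1 h)
     (fun y h => proj1 (proj2 h)) (fun y h => proj1 (proj2 h)).
  have := epsilon_spec (inhabits (\bot%O : B)) (fun z => C z /\ (forall s, S1 s -> (z <= s)%O) /\
       (forall s, S2 s -> (s <= z)%O) /\ ~ S1 z /\ ~ S2 z)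
     (ex_intro _ x (conj Cx (conj (fun s h => proj2 (proj2 h)) (conj (fun s h => proj2 (proj2 h))
        (conj (fun h => hn (or_introl h)) (fun h => hn (or_intror h))))))).
  rewrite /W2 in Mz.
  set z := epsilon _ _ in Mz *.
  move=> [Cz [Hz1 [Hz2 [nz1 nz2]]]].
  exfalso.
  case: (Cch z x Cz Cx) => [zx|xz].
  + case: (HFN z x zx) => c [fzc fxc zc cx].
    have Mc := Mf z c Mz fzc.
    have S2c : S2 c by split=> //; split.
    have ecz : c = z by apply/le_anti; rewrite zc Hz2.
    by apply: nz2; rewrite -ecz.
  + case: (HFN x z xz) => c [fxc fzc xc cz].
    have Mc := Mf z c Mz fzc.
    have S1c : S1 c by split=> //; split.
    have ecz : c = z by apply/le_anti; rewrite cz Hz1.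
    by apply: nz1; rewrite -ecz.
Qed.
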